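(* Let $m, n, k, l, t, r$ be positive integers satisfying $k\geq l \geq t+r$ and $\min\{m, n\}\geq k+l-t+2$. Let $T$ be a $(t+2r)$-element subset of $[\min\{m,n\}]$ and fix $j\in [\min\{m,n\}]\setminus T$. For any $A\in \binom{[n]\setminus (T\cup \{j\})}{k-r-t}$ and $B \in \binom{[m]\setminus (T\cup \{j\})}{l-r-t}$ with $|A\cap B|=w$, there exist $A_1, A_2, \ldots, A_{w+1} \in \binom{[n]\setminus (T\cup \{j\})}{k-r-t}$ and $B_1, B_2, \ldots, B_{w+1} \in \binom{[m]\setminus (T\cup \{j\})}{l-r-t}$ such that (1) $A_i \cap B_i=\emptyset$ for $i=1,\ldots, w+1$; (2) $A_{i+1} \cap B_i=\emptyset$ for $i=1,\ldots, w$; (3) $A_1=A$ and $B_{w+1}=B$.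
   Context: $[n]=\{1,\dots,n\}$ and $\binom{D}{k}$ denotes the family of all $k$-element subsets of a finite set $D$. *)

(* Defs.v *)
From mathcomp Require Import all_boot.
From mathcomp Require Export finmap.
Set Implicit Arguments. Unset Strict Implicit. Unset Printing Implicit Defensive.
Local Open Scope fset_scope.

Definition range1 (n : nat) : {fset nat} := [fset i | i in iota 1 n].

Definition in_binom (D : {fset nat}) (k : nat) (S : {fset nat}) : bool :=
  (S `<=` D) && (#|` S| == k).

(* Main.v *)
Require Import Defs.
From mathcomp Require Import all_boot.
From mathcomp Require Import finmap.
From mathcomp Require Import zify.
Local Open Scope fset_scope.

Lemma pick_sub (X : {fset nat}) b : b <= #|` X| ->
  exists S : {fset nat}, S `<=` X /\ #|` S| = b.
Proof.
move=> hb; exists [fset x in take b (enum_fset X)]; split.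
  apply/fsubsetP=> x; rewrite in_fset /= => /mem_take; done.
rewrite card_fseq undup_id ?size_take; last by apply: take_uniq; apply: fset_uniq.
by case: ltnP => // h; apply/eqP; rewrite eqn_leq h hb.
Qed.

Lemma range1_card n : #|` range1 n| = n.
Proof. by rewrite card_fseq undup_id ?iota_uniq // size_iota. Qed.

Lemma disj (X Y S Z : {fset nat}) : X `<=` Y -> S `<=` Z `\` Y -> X `&` S = fset0.
Proof.
move=> hX hS; apply/eqP; rewrite -fsubset0; apply/fsubsetP=> z.
rewrite inE => /andP[zX zS]; move/fsubsetP: hS => /(_ z zS).
by rewrite inE (fsubsetP hX z zX).
Qed.

Lemma card_diff_ge (D X : {fset nat}) : #|` D| - #|` X| <= #|` D `\` X|.
Proof.
rewrite cardfsD; have := fsubset_leq_card (fsubsetIr D X); lia.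
Qed.

Lemma chain {Dn Dm B : {fset nat}} {a b} : B `<=` Dm -> #|`B| = b ->
  a+b+1 <= #|`Dn| -> a+b+1 <= #|`Dm| ->
  forall {w A}, A `<=` Dn -> #|`A| = a -> #|`A `&` B| = w ->
  exists As Bs : nat -> {fset nat},
    (forall i, 1 <= i <= w.+1 -> in_binom Dn a (As i) /\ in_binom Dm b (Bs i)) /\
    (forall i, 1 <= i <= w.+1 -> As i `&` Bs i = fset0) /\
    (forall i, 1 <= i <= w -> As i.+1 `&` Bs i = fset0) /\
    As 1 = A /\ Bs w.+1 = B.
Proof.
move=> BD cB cDn cDm w; elim: w => [|w IH] A AD cA cAB.
  exists (fun _ => A), (fun _ => B); split; last split; last split => //.
  - by move=> i _; rewrite /in_binom AD BD cA cB !eqxx.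
  - by move=> i _; apply/eqP; rewrite -cardfs_eq0 cAB.
  - by move=> i; case: i.
have [x xAB] : exists x, x \in A `&` B.
  apply/fset0Pn; rewrite -cardfs_eq0 cAB //.
have [y yD] : exists y, y \in Dn `\` (A `|` B).
  apply/fset0Pn; rewrite -cardfs_eq0 -lt0n.
  have := card_diff_ge Dn (A `|` B); have := cardfsUI A B; lia.
move: yD; rewrite !inE negb_or => /andP[/andP[yA yB] yDn].
move: (xAB); rewrite inE => /andP[xA xB].
set A' := y |` (A `\ x).
have A'D : A' `<=` Dn.
  apply/fsubsetP=> z; rewrite !inE => /orP[/eqP->//|/andP[_ zA]].
  exact: (fsubsetP AD).
have cA' : #|` A'| = a.
  rewrite cardfsU1 (_ : y \notin A `\ x = true); last by rewrite !inE (negbTE yA) andbF.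
  have := cardfsD1 x A; rewrite xA; lia.
have eI : A' `&` B = (A `&` B) `\ x.
  apply/fsetP=> z; rewrite !inE; case: (z =P y) => [->|_] /=.
    by rewrite (negbTE yB) !andbF.
  by rewrite andbA.
have cA'B : #|` A' `&` B| = w.
  rewrite eI; have := cardfsD1 x (A `&` B); rewrite xAB cAB; lia.
have [B1 [B1s cB1]] : exists B1 : {fset nat}, B1 `<=` Dm `\` (y |` A) /\ #|` B1| = b.
  apply: pick_sub; have := card_diff_ge Dm (y |` A).
  rewrite cardfsU1 cA yA /= => h; apply: leq_trans h; rewrite leq_subRL; last by apply: leq_trans cDm; lia.
  by apply: leq_trans cDm; lia.
have [As [Bs [H1 [H2 [H3 [H4 H5]]]]]] := IH A' A'D cA' cA'B.
exists (fun i => if i <= 1 then A else As i.-1),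
       (fun i => if i <= 1 then B1 else Bs i.-1).
split; last split; last split.
- move=> [|[|i]] //= hi.
    split; rewrite /in_binom ?AD ?cA ?eqxx //.
    by rewrite cB1 eqxx andbT; apply: fsubset_trans B1s (fsubsetDl _ _).
  by apply: H1.
- move=> [|[|i]] //= hi; last by apply: H2.
  apply: disj B1s; exact: fsubsetU1.
- move=> [|[|i]] //= hi; last by apply: (H3 i.+1).
  rewrite H4; apply: disj B1s.
  apply/fsubsetP=> z; rewrite !inE => /orP[->//|/andP[_ ->]]; by rewrite orbT.
- by split.
Qed.

Lemma range1_sub {p q} : p <= q -> range1 p `<=` range1 q.
Proof.
move=> h; apply/fsubsetP=> z; rewrite /range1 !inE /= !mem_iota; lia.
Qed.

Lemma cardD {p} {T : {fset nat}} {j} : T `<=` range1 p -> j \in range1 p -> j \notin T ->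
  #|` range1 p `\` (T `|` [fset j])| = p - (#|` T| + 1).
Proof.
move=> hT hj hjT.
rewrite cardfsDS; last by rewrite fsubUset hT fsub1set hj.
by rewrite range1_card fsetUC cardfsU1 hjT addnC.
Qed.

Theorem lemma4p3 (m n k l t r : nat) (T : {fset nat}) (j : nat)
  (A B : {fset nat}) (w : nat) :
  0 < m -> 0 < n -> 0 < k -> 0 < l -> 0 < t -> 0 < r ->
  l <= k -> t + r <= l ->
  k + l - t + 2 <= minn m n ->
  T `<=` range1 (minn m n) -> #|` T| = (t + 2 * r)%N ->
  j \in range1 (minn m n) -> j \notin T ->
  in_binom (range1 n `\` (T `|` [fset j])) (k - r - t) A ->
  in_binom (range1 m `\` (T `|` [fset j])) (l - r - t) B ->
  #|` (A `&` B)| = w ->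
  exists As Bs : nat -> {fset nat},
    (forall i, 1 <= i <= w.+1 ->
       in_binom (range1 n `\` (T `|` [fset j])) (k - r - t) (As i) /\
       in_binom (range1 m `\` (T `|` [fset j])) (l - r - t) (Bs i)) /\
    (forall i, 1 <= i <= w.+1 -> As i `&` Bs i = fset0) /\
    (forall i, 1 <= i <= w -> As i.+1 `&` Bs i = fset0) /\
    As 1 = A /\ Bs w.+1 = B.
Proof.
move=> m0 n0 k0 l0 t0 r0 lk trl hmin hT cT hj hjT /andP[AD /eqP cA] /andP[BD /eqP cB] cAB.
have hmn : minn m n <= n by apply: geq_minr.
have hmm : minn m n <= m by apply: geq_minl.
have h1 : k - r - t + (l - r - t) + 1 <= #|` range1 n `\` (T `|` [fset j])|.
  rewrite (cardD (fsubset_trans hT (range1_sub hmn)) (fsubsetP (range1_sub hmn) _ hj) hjT) cT.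
  lia.
have h2 : k - r - t + (l - r - t) + 1 <= #|` range1 m `\` (T `|` [fset j])|.
  rewrite (cardD (fsubset_trans hT (range1_sub hmm)) (fsubsetP (range1_sub hmm) _ hj) hjT) cT.
  lia.
exact: (chain BD cB h1 h2 AD cA cAB).
Qed.
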